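(* Let $\mathcal{P}$ be the set of all (nonempty) integer partitions. As formal power series in $x,y$ with coefficients polynomial in $p,q$, $$\sum_{\lambda\in\mathcal{P}}p^{\mathrm{dist}(\lambda)}q^{\mathrm{even}(\lambda)}x^{\ell(\lambda)}y^{\lambda_1}=\frac{pxy}{1-x}+\frac{\left(\frac{pqx}{1-qx}+\frac{pxy(1-qx+pqx)}{(1-x)(1-qx)}\right)\left(1+\frac{px}{1-x}\right)y^2}{1-\left(1+\frac{px}{1-x}\right)\left(1+\frac{pqx}{1-qx}\right)y^2}.$$ Consequently, $$\sum_{\lambda\in\mathcal{P}}p^{\mathrm{rep}(\lambda)}q^{\mathrm{even}(\lambda)}x^{\Gamma(\lambda)}=\frac{x(1-(p-1)q(x^2+x))}{1-p(1+q)x-(1-p^2q)x^2-(1-p)(1+q)x^3-(p-1)^2qx^4},$$ and in particular $$\sum_{\lambda\in\mathcal{P}}p^{\mathrm{rep}(\lambda)}x^{\Gamma(\lambda)}=\sum_{\lambda\in\mathcal{P}}p^{\mathrm{even}(\lambda)}x^{\Gamma(\lambda)}=\frac{x}{1-(1+p)x-(1-p)x^2}.$$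
   Context: A partition is a finite nonempty weakly decreasing sequence $\lambda=(\lambda_1,\ldots,\lambda_k)$ of positive integers; $\ell(\lambda)=k$ is its number of parts and $\lambda_1$ its largest part. The perimeter is $\Gamma(\lambda)=\lambda_1+\ell(\lambda)-1$. $\mathrm{dist}(\lambda)$ is the number of distinct part values of $\lambda$; $\mathrm{rep}(\lambda)=|\{1\le i\le \ell(\lambda)-1:\lambda_i=\lambda_{i+1}\}|=\ell(\lambda)-\mathrm{dist}(\lambda)$; $\mathrm{even}(\lambda)=|\{1\le i\le\ell(\lambda):\lambda_i\text{ even}\}|$. *)

(* Defs.v *)
From mathcomp Require Import all_boot all_order all_algebra.
Set Implicit Arguments. Unset Strict Implicit. Unset Printing Implicit Defensive.
Import GRing.Theory.
Local Open Scope ring_scope.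

Definition is_partition (s : seq nat) : bool :=
  [&& s != [::], sorted geq s & all (fun k => 0 < k)%N s].
Definition nparts (s : seq nat) : nat := size s.
Definition largest (s : seq nat) : nat := head 0%N s.
Definition perimeter (s : seq nat) : nat := (largest s + nparts s - 1)%N.
Definition dist (s : seq nat) : nat := size (undup s).
Definition rep (s : seq nat) : nat :=
  (\sum_(i < (size s).-1) (nth 0 s i == nth 0 s i.+1))%N.
Definition even (s : seq nat) : nat := count (fun k => ~~ odd k) s.

(* Bivariate series in x,y: f i j = coefficient of x^i y^j. *)
Definition bser (R : comRingType) := nat -> nat -> R.

Section Bser.
Variable R : comRingType.
Definition bcst (c : R) : bser R := fun i j => if (i == 0)%N && (j == 0)%N then c else 0.
Definition bX : bser R := fun i j => if (i == 1)%N && (j == 0)%N then 1 else 0.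
Definition bY : bser R := fun i j => if (i == 0)%N && (j == 1)%N then 1 else 0.
Definition badd (f g : bser R) : bser R := fun i j => f i j + g i j.
Definition bsub (f g : bser R) : bser R := fun i j => f i j - g i j.
Definition bmul (f g : bser R) : bser R := fun i j =>
  \sum_(a < i.+1) \sum_(b < j.+1) f a b * g (i - a)%N (j - b)%N.
Definition bpow (f : bser R) (k : nat) : bser R := iter k (bmul f) (bcst 1).
(* Inverse of a series d with constant term 1: 1/d = sum_k (1-d)^k
   (the sum is finite coefficientwise since 1-d has zero constant term). *)
Definition binv (d : bser R) : bser R := fun i j =>
  \sum_(k < (i + j).+1) bpow (bsub (bcst 1) d) k i j.
Definition bdiv (f d : bser R) : bser R := bmul f (binv d).
End Bser.

Definition user (R : comRingType) := nat -> R.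

Section User.
Variable R : comRingType.
Definition ucst (c : R) : user R := fun n => if (n == 0)%N then c else 0.
Definition uX : user R := fun n => if (n == 1)%N then 1 else 0.
Definition uadd (f g : user R) : user R := fun n => f n + g n.
Definition usub (f g : user R) : user R := fun n => f n - g n.
Definition umul (f g : user R) : user R := fun n =>
  \sum_(a < n.+1) f a * g (n - a)%N.
Definition upow (f : user R) (k : nat) : user R := iter k (umul f) (ucst 1).
Definition uinv (d : user R) : user R := fun n =>
  \sum_(k < n.+1) upow (usub (ucst 1) d) k n.
Definition udiv (f d : user R) : user R := umul f (uinv d).
End User.

(* sum_lambda p^dist q^even x^l y^lambda_1 : coefficient of x^i y^j is the
   sum over partitions with i parts and largest part j (all parts <= j). *)
Definition gf_dist_even (R : comRingType) (p q : R) : bser R := fun i j =>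
  \sum_(t : i.-tuple 'I_j.+1 | is_partition (map val t) && (largest (map val t) == j))
     p ^+ dist (map val t) * q ^+ even (map val t).

(* sum_lambda w(lambda) x^Gamma(lambda) : a partition with perimeter n has
   fewer than n+2 parts, all < n+2. *)
Definition gf_perim (R : comRingType) (w : seq nat -> R) : user R := fun n =>
  \sum_(l < n.+2) \sum_(t : l.-tuple 'I_n.+2 |
          is_partition (map val t) && (perimeter (map val t) == n)) w (map val t).

(* Main.v *)
Require Import Defs.
From mathcomp Require Import all_boot all_order all_algebra.
Local Open Scope ring_scope.
From mathcomp Require Import ring zify.
From Stdlib Require Import Setoid Morphisms.
Set Implicit Arguments. Unset Strict Implicit. Unset Printing Implicit Defensive.
Import GRing.Theory.

Section U.
Variable R : comRingType.
Definition eqm (N : nat) (P Q : {poly R}) : Prop := forall k, (k < N)%N -> P`_k = Q`_k.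

#[global] Instance eqm_equiv N : Equivalence (eqm N).
Proof. split.
- by move=> P k.
- by move=> P Q H k Hk; rewrite H.
- by move=> P Q S H1 H2 k Hk; rewrite H1 // H2.
Qed.

#[global] Instance eqm_add N : Proper (eqm N ==> eqm N ==> eqm N) (@GRing.add _).
Proof. by move=> P P' H Q Q' H' k Hk; rewrite !coefD H // H'. Qed.
#[global] Instance eqm_opp N : Proper (eqm N ==> eqm N) (@GRing.opp _).
Proof. by move=> P P' H k Hk; rewrite !coefN H. Qed.
#[global] Instance eqm_mul N : Proper (eqm N ==> eqm N ==> eqm N) (@GRing.mul _).
Proof.
move=> P P' H Q Q' H' k Hk; rewrite !coefM; apply: eq_bigr => i _.
rewrite H ?H' //; last by apply: leq_ltn_trans Hk; rewrite -ltnS.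
by apply: leq_ltn_trans Hk; rewrite leq_subr.
Qed.

Lemma eqm_sum N I (r : seq I) (F G : I -> {poly R}) :
  (forall i, eqm N (F i) (G i)) -> eqm N (\sum_(i <- r) F i) (\sum_(i <- r) G i).
Proof. by move=> H k Hk; rewrite !coef_sum; apply: eq_bigr => i _; rewrite H. Qed.

Definition tr N (f : user R) : {poly R} := \poly_(k < N) f k.

Lemma coef_tr N f k : (tr N f)`_k = if (k < N)%N then f k else 0.
Proof. by rewrite coef_poly. Qed.

Lemma tr_add N f g : tr N (uadd f g) = tr N f + tr N g.
Proof. by apply/polyP => k; rewrite coefD !coef_tr; case: ifP; rewrite ?addr0. Qed.

Lemma tr_sub N f g : tr N (usub f g) = tr N f - tr N g.
Proof. by apply/polyP => k; rewrite coefB !coef_tr; case: ifP; rewrite ?subr0. Qed.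

Lemma tr_mul N f g : eqm N (tr N (umul f g)) (tr N f * tr N g).
Proof.
move=> k Hk; rewrite coef_tr Hk coefM; apply: eq_bigr => i _.
have H1 : (i < N)%N by apply: leq_ltn_trans Hk; rewrite -ltnS.
have H2 : (k - i < N)%N by apply: leq_ltn_trans Hk; rewrite leq_subr.
by rewrite !coef_tr H1 H2.
Qed.

Lemma tr_cst N c : eqm N (tr N (ucst c)) c%:P.
Proof. by move=> k Hk; rewrite coef_tr Hk coefC. Qed.

Lemma tr_X N : eqm N (tr N (uX R)) 'X.
Proof. by move=> k Hk; rewrite coef_tr Hk coefX /uX; case: (k == 1)%N. Qed.

Lemma tr_pow N f k : eqm N (tr N (upow f k)) (tr N f ^+ k).
Proof.
elim: k => [|k IH]; first by rewrite expr0 /upow /=; exact: tr_cst.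
by rewrite exprS /upow iterS -/(upow f k) tr_mul IH.
Qed.

Lemma eqm_tr N f g : eqm N (tr N f) (tr N g) -> forall n, (n < N)%N -> f n = g n.
Proof. by move=> H n Hn; have := H n Hn; rewrite !coef_tr Hn. Qed.

Lemma pow_low (E : {poly R}) : E`_0 = 0 -> forall k n, (n < k)%N -> (E ^+ k)`_n = 0.
Proof.
move=> E0; elim=> [|k IH] n Hn //; rewrite exprS coefM big1 // => [[j Hj]] _ /=.
case: j Hj => [|j] Hj; first by rewrite E0 mul0r.
by rewrite IH ?mulr0 //; lia.
Qed.

Lemma tr_inv N d : d 0%N = 1 -> eqm N (tr N (uinv d) * tr N d) 1.
Proof.
move=> d0; set e := usub (ucst 1) d; set E := tr N e.
have E0 : E`_0 = 0.
  by rewrite /E coef_tr; case: ifP => // _; rewrite /e /usub /ucst /= d0 subrr.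
have Hd : eqm N (tr N d) (1 - E).
  by rewrite /E /e tr_sub tr_cst opprB addrC subrK.
have Hi : eqm N (tr N (uinv d)) (\sum_(k < N) E ^+ k).
  move=> n Hn; rewrite coef_tr Hn coef_sum /uinv.
  rewrite (big_ord_widen N (fun k => upow e k n)) // big_mkcond /=.
  apply: eq_bigr => k _; case: ifP => Hk.
    by rewrite -(@tr_pow N e k _ Hn) coef_tr Hn.
  by rewrite pow_low // ltnNge -ltnS Hk.
rewrite Hi Hd.
have -> : (\sum_(k < N) E ^+ k) * (1 - E) = 1 - E ^+ N.
  by rewrite -[1 - E ^+ N]opprB subrX1; ring.
by move=> k Hk; rewrite coefB (pow_low E0 Hk) subr0.
Qed.

Lemma eqm_cancel N (P Q u : {poly R}) : u`_0 = 1 -> eqm N (P * u) (Q * u) -> eqm N P Q.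
Proof.
move=> u0 H.
pose f : user R := fun k => u`_k.
have Hu : eqm N (tr N f) u by move=> k Hk; rewrite coef_tr Hk.
have Hi := @tr_inv N f u0; rewrite Hu in Hi.
have e1 : forall S, eqm N S (S * u * tr N (uinv f)).
  by move=> S; rewrite -mulrA [u * _]mulrC Hi mulr1; reflexivity.
rewrite (e1 P) (e1 Q) H; reflexivity.
Qed.

Lemma udiv_char N (f num d : user R) (Pn Pd : {poly R}) :
  d 0%N = 1 -> eqm N (tr N d) Pd -> eqm N (tr N num) Pn ->
  eqm N (tr N f * Pd) Pn -> forall n, (n < N)%N -> f n = udiv num d n.
Proof.
move=> d0 Hd Hn Hf; apply: eqm_tr.
have Hi := @tr_inv N d d0; rewrite Hd in Hi.
rewrite /udiv tr_mul Hn -Hf -mulrA [Pd * _]mulrC Hi mulr1; reflexivity.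
Qed.

End U.

Section B.
Variable R : comRingType.
Definition eqm2 (N : nat) (P Q : {poly {poly R}}) : Prop :=
  forall j, (j < N)%N -> eqm N P`_j Q`_j.

#[global] Instance eqm2_equiv N : Equivalence (eqm2 N).
Proof. split.
- by move=> P j Hj; reflexivity.
- by move=> P Q H j Hj; rewrite (H j Hj); reflexivity.
- by move=> P Q S H1 H2 j Hj; rewrite (H1 j Hj) (H2 j Hj); reflexivity.
Qed.

#[global] Instance eqm2_add N : Proper (eqm2 N ==> eqm2 N ==> eqm2 N) (@GRing.add _).
Proof. by move=> P P' H Q Q' H' k Hk; rewrite !coefD (H k Hk) (H' k Hk); reflexivity. Qed.
#[global] Instance eqm2_opp N : Proper (eqm2 N ==> eqm2 N) (@GRing.opp _).
Proof. by move=> P P' H k Hk; rewrite !coefN (H k Hk); reflexivity. Qed.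
#[global] Instance eqm2_mul N : Proper (eqm2 N ==> eqm2 N ==> eqm2 N) (@GRing.mul _).
Proof.
move=> P P' H Q Q' H' k Hk; rewrite !coefM; apply: eqm_sum => i.
have H1 : (i < N)%N by apply: leq_ltn_trans Hk; rewrite -ltnS.
have H2 : (k - i < N)%N by apply: leq_ltn_trans Hk; rewrite leq_subr.
rewrite (H i H1) (H' _ H2); reflexivity.
Qed.

Definition tr2 N (f : bser R) : {poly {poly R}} := \poly_(j < N) tr N (fun i => f i j).

Lemma coef_tr2 N f j i : (tr2 N f)`_j`_i = if ((j < N) && (i < N))%N then f i j else 0.
Proof. by rewrite coef_poly; case: ifP => /= _; [apply: coef_tr | rewrite coef0]. Qed.

Lemma eqm2P N (P Q : {poly {poly R}}) :
  (forall j i, (j < N)%N -> (i < N)%N -> P`_j`_i = Q`_j`_i) -> eqm2 N P Q.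
Proof. by move=> H j Hj i Hi; apply: H. Qed.

Lemma tr2_add N f g : tr2 N (badd f g) = tr2 N f + tr2 N g.
Proof.
apply/polyP => j; apply/polyP => i; rewrite !coefD !coef_tr2.
by case: ifP; rewrite ?addr0.
Qed.

Lemma tr2_sub N f g : tr2 N (bsub f g) = tr2 N f - tr2 N g.
Proof.
apply/polyP => j; apply/polyP => i; rewrite !coefB !coef_tr2.
by case: ifP; rewrite ?subr0.
Qed.

Lemma tr2_mul N f g : eqm2 N (tr2 N (bmul f g)) (tr2 N f * tr2 N g).
Proof.
apply: eqm2P => j i Hj Hi; rewrite coef_tr2 Hj Hi coefM coef_sum /bmul.
rewrite exchange_big /=; apply: eq_bigr => b _; rewrite coefM.
apply: eq_bigr => a _.
have H1 : (a < N)%N by apply: leq_ltn_trans Hi; rewrite -ltnS.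
have H2 : (i - a < N)%N by apply: leq_ltn_trans Hi; rewrite leq_subr.
have H3 : (b < N)%N by apply: leq_ltn_trans Hj; rewrite -ltnS.
have H4 : (j - b < N)%N by apply: leq_ltn_trans Hj; rewrite leq_subr.
by rewrite !coef_tr2 H1 H2 H3 H4.
Qed.

Lemma tr2_cst N c : eqm2 N (tr2 N (bcst c)) c%:P%:P.
Proof.
apply: eqm2P => j i Hj Hi; rewrite coef_tr2 Hj Hi !coefC /bcst.
by case: (j == 0)%N; rewrite /= ?coef0 ?andbT ?andbF // coefC.
Qed.

Lemma tr2_X N : eqm2 N (tr2 N (bX R)) 'X%:P.
Proof.
apply: eqm2P => j i Hj Hi; rewrite coef_tr2 Hj Hi !coefC /bX.
by case: (j == 0)%N; rewrite ?coef0 ?andbF // coefX andbT; case: (i == 1)%N.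
Qed.

Lemma tr2_Y N : eqm2 N (tr2 N (bY R)) 'X.
Proof.
apply: eqm2P => j i Hj Hi; rewrite coef_tr2 Hj Hi coefX /bY.
by case: (j == 1)%N; rewrite ?coef0 ?andbF ?andbT // coefC.
Qed.

Lemma tr2_pow N f k : eqm2 N (tr2 N (bpow f k)) (tr2 N f ^+ k).
Proof.
elim: k => [|k IH]; first by rewrite expr0 /bpow /=; exact: tr2_cst.
by rewrite exprS /bpow iterS -/(bpow f k) tr2_mul IH; reflexivity.
Qed.

Lemma eqm2_tr N f g : eqm2 N (tr2 N f) (tr2 N g) ->
  forall i j, (i < N)%N -> (j < N)%N -> f i j = g i j.
Proof. by move=> H i j Hi Hj; have := H j Hj i Hi; rewrite !coef_tr2 Hi Hj. Qed.

Lemma pow_low2 (E : {poly {poly R}}) : E`_0`_0 = 0 ->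
  forall k j i, (i + j < k)%N -> (E ^+ k)`_j`_i = 0.
Proof.
move=> E0; elim=> [|k IH] j i Hn //; rewrite exprS coefM coef_sum big1 //.
move=> [b Hb] _ /=; rewrite coefM big1 // => [[a Ha]] _ /=.
case: (posnP b) => [b0|bpos].
  case: (posnP a) => [a0|apos]; first by rewrite b0 a0 E0 mul0r.
  by rewrite IH ?mulr0 //; lia.
by rewrite IH ?mulr0 //; lia.
Qed.

Lemma tr2_inv N d : d 0%N 0%N = 1 -> eqm2 N (tr2 N (binv d) * tr2 N d) 1.
Proof.
move=> d0; set e := bsub (bcst 1) d; set E := tr2 N e.
have E0 : E`_0`_0 = 0.
  by rewrite /E coef_tr2; case: ifP => // _; rewrite /e /bsub /bcst /= d0 subrr.
have Hd : eqm2 N (tr2 N d) (1 - E).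
  by rewrite /E /e tr2_sub tr2_cst opprB addrC subrK; reflexivity.
have Hi : eqm2 N (tr2 N (binv d)) (\sum_(k < N + N) E ^+ k).
  apply: eqm2P => j i Hj Hi; rewrite coef_tr2 Hj Hi coef_sum coef_sum /binv.
  rewrite (big_ord_widen (N + N) (fun k => bpow e k i j)); last by lia.
  rewrite big_mkcond /=.
  apply: eq_bigr => k _; case: ifP => Hk.
    by rewrite -(@tr2_pow N e k j Hj i Hi) coef_tr2 Hj Hi.
  by rewrite pow_low2 //; lia.
rewrite Hi Hd.
have -> : (\sum_(k < N + N) E ^+ k) * (1 - E) = 1 - E ^+ (N + N).
  by rewrite -[1 - E ^+ _]opprB subrX1; ring.
apply: eqm2P => j i Hj Hi2; rewrite !coefB (pow_low2 E0) ?subr0 //; lia.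
Qed.

Lemma eqm2_cancel N (P Q u : {poly {poly R}}) : u`_0`_0 = 1 ->
  eqm2 N (P * u) (Q * u) -> eqm2 N P Q.
Proof.
move=> u0 H.
pose f : bser R := fun i j => u`_j`_i.
have Hu : eqm2 N (tr2 N f) u by apply: eqm2P => j i Hj Hi; rewrite coef_tr2 Hj Hi.
have Hi := @tr2_inv N f u0; rewrite Hu in Hi.
have e1 : forall S, eqm2 N S (S * u * tr2 N (binv f)).
  by move=> S; rewrite -mulrA [u * _]mulrC Hi mulr1; reflexivity.
rewrite (e1 P) (e1 Q) H; reflexivity.
Qed.

End B.

Section Z.
Variable R : comRingType.
Variable N : nat.
Definition Zm (P : {poly R}) := eqm N P 0.
Lemma Zadd a b : Zm a -> Zm b -> Zm (a + b).
Proof. by move=> Ha Hb k Hk; rewrite coefD Ha // Hb // coef0 addr0. Qed.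
Lemma Zsub a b : Zm a -> Zm b -> Zm (a - b).
Proof. by move=> Ha Hb k Hk; rewrite coefB Ha // Hb // coef0 subr0. Qed.
Lemma Zmul c a : Zm a -> Zm (c * a).
Proof. rewrite /Zm => Ha; rewrite Ha mulr0; reflexivity. Qed.
Lemma Zmulr c a : Zm a -> Zm (a * c).
Proof. rewrite /Zm => Ha; rewrite Ha mul0r; reflexivity. Qed.
Lemma Z0 : Zm 0. Proof. by []. Qed.
Lemma Zeq a b : Zm (a - b) -> eqm N a b.
Proof. by move=> H k Hk; apply/eqP; rewrite -subr_eq0 -coefB H // coef0. Qed.
Lemma eqZ a b : eqm N a b -> Zm (a - b).
Proof. by move=> H k Hk; rewrite coefB H // subrr coef0. Qed.
End Z.

Section G.
Variables (R : comRingType) (al be q : R).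
Definition zz (b : nat) : R := q ^+ (~~ odd b).
Definition uu b : {poly R} := 1 - (al * zz b)%:P * 'X.
Definition vv b : {poly R} := uu b + (be * zz b)%:P * 'X.

Lemma uu0 b : (uu b)`_0 = 1.
Proof. by rewrite /uu coefB coef1 coefCM coefX mulr0 subr0. Qed.

Lemma zz_odd b : zz b.+2 = zz b.
Proof. by rewrite /zz /= negbK. Qed.

Lemma zz1 : zz 1 = 1. Proof. by rewrite /zz /= expr0. Qed.
Lemma zz2 : zz 2 = q. Proof. by rewrite /zz /= expr1. Qed.

Lemma generic N (Dp Mp gp : nat -> {poly R}) :
  eqm N (Dp 0%N) 1 -> eqm N (gp 0%N) 0 ->
  (forall b, eqm N (Mp b.+1) (be%:P * Dp b + (al * zz b.+1)%:P * 'X * Mp b.+1)) ->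
  (forall b, eqm N (Dp b.+1) (Dp b + (zz b.+1)%:P * 'X * Mp b.+1)) ->
  (forall b, eqm N (gp b.+1) ((zz b.+1)%:P * 'X * Mp b.+1)) ->
  eqm2 N ((\poly_(j < N) gp j) * ((uu 1 * uu 2)%:P - (vv 1 * vv 2)%:P * 'X^2))
         ((be%:P * 'X * uu 2)%:P * 'X + ((be * q)%:P * 'X * vv 1)%:P * 'X^2).
Proof.
move=> h0 g0 h1 h2 h3.
have d1 : forall b, Zm N (Dp b.+1 * uu b.+1 - Dp b * vv b.+1).
  move=> b; have e1 := eqZ (h1 b); have e2 := eqZ (h2 b).
  set m := Mp b.+1 in e1 e2 *.
  have -> : Dp b.+1 * uu b.+1 - Dp b * vv b.+1 =
     uu b.+1 * (Dp b.+1 - (Dp b + (zz b.+1)%:P * 'X * m)) +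
     (zz b.+1)%:P * 'X * (m - (be%:P * Dp b + (al * zz b.+1)%:P * 'X * m)).
    by rewrite /vv /uu !polyCM; ring.
  by apply: Zadd; apply: Zmul.
have d2 : forall b, Zm N (gp b.+1 * uu b.+1 - (be * zz b.+1)%:P * 'X * Dp b).
  move=> b; have e1 := eqZ (h1 b); have e3 := eqZ (h3 b).
  set m := Mp b.+1 in e1 e3 *.
  have -> : gp b.+1 * uu b.+1 - (be * zz b.+1)%:P * 'X * Dp b =
     uu b.+1 * (gp b.+1 - (zz b.+1)%:P * 'X * m) +
     (zz b.+1)%:P * 'X * (m - (be%:P * Dp b + (al * zz b.+1)%:P * 'X * m)).
    by rewrite /vv /uu !polyCM; ring.
  by apply: Zadd; apply: Zmul.
have D0 := eqZ h0; have G0 := eqZ g0; rewrite subr0 in G0.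
move=> j Hj; rewrite mulrBr mulrA !coefB !coefMC coefMXn coefMC !coef_poly Hj.
rewrite coefD coefMX coefMXn !coefC.
case: j Hj => [|[|[|b]]] Hj /=.
- rewrite subr0 addr0; apply: Zeq; rewrite subr0; exact: Zmulr.
- rewrite subr0 addr0; apply: Zeq.
  have e := d2 0%N; rewrite zz1 in e.
  have -> : gp 1%N * (uu 1 * uu 2) - be%:P * 'X * uu 2 =
    uu 2 * (gp 1%N * uu 1 - (be * 1)%:P * 'X * Dp 0%N) + uu 2 * be%:P * 'X * (Dp 0%N - 1).
    by rewrite polyCM; ring.
  by apply: Zadd; apply: Zmul.
- rewrite add0r subnn (_ : (0 < N)%N = true); last by lia.
  apply: Zeq.
  have e := d2 1%N; rewrite zz2 in e. have e' := d1 0%N.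
  have -> : gp 2%N * (uu 1 * uu 2) - gp 0%N * (vv 1 * vv 2) - (be * q)%:P * 'X * vv 1 =
    uu 1 * (gp 2%N * uu 2 - (be * q)%:P * 'X * Dp 1%N)
    + (be * q)%:P * 'X * (Dp 1%N * uu 1 - Dp 0%N * vv 1)
    + (be * q)%:P * 'X * vv 1 * (Dp 0%N - 1) - vv 1 * vv 2 * gp 0%N.
    by ring.
  apply: Zsub; last exact: Zmul.
  by apply: Zadd; [apply: Zadd|]; apply: Zmul.
- rewrite add0r (_ : (b.+3 - 2 = b.+1)%N); last by lia.
  rewrite (_ : (b.+1 < N)%N = true); last by lia.
  apply: Zeq; rewrite subr0.
  apply: (@eqm_cancel _ _ _ _ (uu b.+1)); first exact: uu0.
  rewrite mul0r.
  have e1 := d2 b.+2; have e2 := d1 b.+1; have e3 := d1 b; have e4 := d2 b.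
  have Hu : uu b.+3 = uu b.+1 by rewrite /uu zz_odd.
  have Hv : forall k, uu k.+2 * uu k.+1 = uu 1 * uu 2 /\ vv k.+1 * vv k.+2 = vv 1 * vv 2.
    move=> k; rewrite /vv /uu !zz_odd /zz /=; case: (odd k) => /=; split; ring.
  have [Hu' Hv'] := Hv b.+1; have [_ Hv''] := Hv b.
  rewrite -Hu' -Hv'' Hu in e1 *.
  rewrite zz_odd in e1.
  set z := zz b.+1 in e1 e4 *.
  have -> : (gp b.+3 * (uu b.+1 * uu b.+2) - gp b.+1 * (vv b.+1 * vv b.+2)) * uu b.+1
     = (gp b.+3 * uu b.+1 - (be * z)%:P * 'X * Dp b.+2) * uu b.+2 * uu b.+1
     + (be * z)%:P * 'X * uu b.+1 * (Dp b.+2 * uu b.+2 - Dp b.+1 * vv b.+2)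
     + (be * z)%:P * 'X * vv b.+2 * (Dp b.+1 * uu b.+1 - Dp b * vv b.+1)
     - vv b.+1 * vv b.+2 * (gp b.+1 * uu b.+1 - (be * z)%:P * 'X * Dp b).
    by ring.
  apply: Zsub; last exact: Zmul.
  apply: Zadd; [apply: Zadd|]; last exact: Zmul.
    by apply: Zmulr; apply: Zmulr.
  exact: Zmul.
Qed.
End G.

Section C.
Variables (R : comRingType) (al be q : R).

Lemma generic_coef N (Dc Mc gc : nat -> nat -> R) :
  (forall b, Dc 0%N b = 1) -> (forall i, Dc i.+1 0%N = 0) ->
  (forall i, gc i 0%N = 0) -> (forall b, gc 0%N b = 0) ->
  (forall b, Mc 0%N b.+1 = be) ->
  (forall i b, Mc i.+1 b.+1 = be * Dc i.+1 b + al * zz q b.+1 * Mc i b.+1) ->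
  (forall i b, Dc i.+1 b.+1 = Dc i.+1 b + zz q b.+1 * Mc i b.+1) ->
  (forall i b, gc i.+1 b.+1 = zz q b.+1 * Mc i b.+1) ->
  eqm2 N ((\poly_(j < N) tr N (fun i => gc i j)) *
            ((uu al q 1 * uu al q 2)%:P - (vv al be q 1 * vv al be q 2)%:P * 'X^2))
         ((be%:P * 'X * uu al q 2)%:P * 'X + ((be * q)%:P * 'X * vv al be q 1)%:P * 'X^2).
Proof.
move=> D0 Di0 g0 g0' M0 MS DS gS.
apply: (@generic R al be q N (fun b => tr N (Dc^~ b)) (fun b => tr N (Mc^~ b))
          (fun b => tr N (gc^~ b))).
- move=> k Hk; rewrite coef_tr Hk coef1; case: k {Hk} => [|k] /=; by rewrite ?D0 ?Di0.
- by move=> k Hk; rewrite coef_tr Hk g0 coef0.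
- move=> b k Hk; rewrite coefD coefCM -mulrA coefCM coefXM !coef_tr Hk.
  case: k Hk => [|k] Hk /=; first by rewrite M0 D0 mulr1 mulr0 addr0.
  by rewrite (_ : (k < N)%N = true) ?MS //; lia.
- move=> b k Hk; rewrite coefD -mulrA coefCM coefXM !coef_tr Hk.
  case: k Hk => [|k] Hk /=; first by rewrite !D0 mulr0 addr0.
  by rewrite (_ : (k < N)%N = true) ?DS //; lia.
- move=> b k Hk; rewrite -mulrA coefCM coefXM !coef_tr Hk.
  case: k Hk => [|k] Hk /=; first by rewrite g0' mulr0.
  by rewrite (_ : (k < N)%N = true) ?gS //; lia.
Qed.
End C.

Fixpoint decs (i b : nat) : seq (seq nat) :=
  if i is i'.+1 then [seq x :: s | x <- iota 1 b, s <- decs i' x] else [:: [::]].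

Lemma decs_split i b :
  decs i.+1 b.+1 = decs i.+1 b ++ [seq b.+1 :: s | s <- decs i b.+1].
Proof.
change (decs i.+1 b.+1) with [seq x :: s | x <- iota 1 b.+1, s <- decs i x].
rewrite (_ : iota 1 b.+1 = iota 1 b ++ [:: b.+1]); last by rewrite -[b.+1]addn1 iotaD addnC.
by rewrite allpairs_cat allpairs_cons /= cats0.
Qed.

Lemma geq_trans : ssrbool.transitive geq.
Proof. by move=> a b c /= h1 h2; apply: leq_trans h2 h1. Qed.

Lemma mem_decs i b s : (s \in decs i b) =
  [&& size s == i, sorted geq s, all (fun k => 0 < k)%N s & all (fun k => k <= b)%N s].
Proof.
elim: i b s => [|i IH] b [|x s] //=.
- by apply/allpairsPdep => -[y [t [_ _]]].
- rewrite eqSS (path_sortedE geq_trans).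
  apply/allpairsPdep/idP => [[y [t [Hy Ht [-> ->]]]] | H].
    rewrite IH in Ht; rewrite mem_iota in Hy.
    case/and4P: Ht => -> -> -> Ht /=.
    have Hy1 : (0 < y <= b)%N by lia.
    rewrite !andbT; apply/and4P; split => //; try lia.
    by apply/allP => k Hk; apply: leq_trans (allP Ht k Hk) _; lia.
  case/and5P: H => Hs /andP[Ha Hso] /andP[Hx Hp] Hxb Hb.
  exists x, s; split => //; first by rewrite mem_iota; lia.
  by rewrite IH Hs Hso Hp.
Qed.

Lemma decs_le i b s : s \in decs i b -> all (fun k => k <= b)%N s.
Proof. by rewrite mem_decs => /and4P[]. Qed.

Lemma uniq_decs i b : uniq (decs i b).
Proof.
elim: i b => [|i IH] b //; elim: b => [|b IHb] //.
rewrite decs_split cat_uniq IHb map_inj_uniq ?IH ?andbT; last by move=> ? ? [].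
apply/hasPn => s /mapP[t _ ->]; rewrite mem_decs /= ltnn.
by rewrite !andbF.
Qed.

Section Sums.
Variable R : comRingType.

Lemma sum_tuple (i n : nat) (P : pred (seq nat)) (F : seq nat -> R) (L : seq (seq nat)) :
  uniq L -> (forall s, (s \in L) = [&& size s == i, all (fun k => k < n)%N s & P s]) ->
  \sum_(t : i.-tuple 'I_n | P (map val t)) F (map val t) = \sum_(s <- L) F s.
Proof.
move=> UL ML.
rewrite -(big_map (fun t : i.-tuple 'I_n => map val t) P F) -big_filter.
apply: perm_big; apply: uniq_perm => //.
  rewrite filter_uniq // map_inj_uniq ?index_enum_uniq //.
  by move=> t1 t2 /(inj_map val_inj) /val_inj.
move=> s; rewrite ML andbA mem_filter [P s && _]andbC; congr (_ && _).
apply/mapP/idP => [[t _ ->]|/andP[Hs Ha]].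
  rewrite size_map size_tuple eqxx /= all_map; apply/allP => k _ /=; exact: ltn_ord.
have Hsz : size (pmap (insub : nat -> option 'I_n) s) == i.
  by rewrite size_pmap_sub; move: Ha; rewrite all_count => /eqP ->.
exists (Tuple Hsz); first by rewrite mem_index_enum.
rewrite /= (pmap_filter (insubK _)); apply/esym/all_filterP.
by rewrite (eq_all (isSome_insub _)).
Qed.

Lemma sum_decs_split (F : seq nat -> R) i b :
  \sum_(s <- decs i.+1 b.+1) F s =
  \sum_(s <- decs i.+1 b) F s + \sum_(s <- decs i b.+1) F (b.+1 :: s).
Proof. by rewrite decs_split big_cat big_map. Qed.

End Sums.

Definition Lp (i j : nat) : seq (seq nat) :=
  if i is i'.+1 then (if j is j'.+1 then [seq j :: s | s <- decs i' j] else [::]) else [::].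

Lemma uniq_Lp i j : uniq (Lp i j).
Proof.
case: i => [|i] //; case: j => [|j] //=.
by rewrite map_inj_uniq ?uniq_decs // => ? ? [].
Qed.

Lemma mem_Lp i j s : (s \in Lp i j) =
  [&& size s == i, is_partition s & largest s == j].
Proof.
rewrite /is_partition /largest.
case: s => [|x s].
  rewrite /= andbF; case: i => [|i] //; case: j => [|j] //=.
  by apply/mapP => -[t _].
case: i => [|i] //.
rewrite /= eqSS (path_sortedE geq_trans).
case: j => [|j].
  by rewrite /= in_nil; case: x => [|x] //=; rewrite !andbF.
case: (x =P j.+1) => [->|ne].
  rewrite mem_map; last by move=> ? ? [].
  rewrite mem_decs /= !andbT.
  apply/and4P/and3P => [[-> -> -> H]|[-> /andP[H ->] ->]].
    by split => //; rewrite andbT; exact: H.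
  by split => //; exact: H.
rewrite !andbF; apply/negbTE/mapP => -[t _ [E _]]; exact: ne.
Qed.

Lemma part_le s : is_partition s -> all (fun k => k <= largest s)%N s.
Proof.
case: s => [|x s] // /and3P[_ /= Hs _].
rewrite /= leqnn /=; move: Hs; rewrite (path_sortedE geq_trans) => /andP[H _]; exact: H.
Qed.

Lemma part_pos s : is_partition s -> (0 < largest s)%N /\ (0 < size s)%N.
Proof. by case: s => [|x s] // /and3P[_ _ /= /andP[Hx _]]. Qed.

Lemma rep_cons x s : (0 < x)%N -> rep (x :: s) = ((head 0%N s == x) + rep s)%N.
Proof.
move=> Hx; case: s => [|y s].
  by rewrite /rep /= !big_ord0; case: x Hx.
rewrite /rep /= big_ord_recl /=; congr (_ + _)%N; first by rewrite eq_sym.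
Qed.

Section W.
Variables (R : comRingType) (p q : R).
Definition Wd (s : seq nat) : R := p ^+ dist s * q ^+ even s.
Definition Vr (s : seq nat) : R := p ^+ rep s * q ^+ even s.

Lemma Wd_cons x s : Wd (x :: s) = zz q x * (p ^+ (x \notin s) * Wd s).
Proof.
rewrite /Wd /dist /even /zz /= exprD.
by case: (x \in s) => /=; rewrite ?expr0 ?expr1 ?exprS; ring.
Qed.

Lemma Vr_cons x s : (0 < x)%N -> Vr (x :: s) = zz q x * (p ^+ (head 0%N s == x) * Vr s).
Proof. by move=> Hx; rewrite /Vr rep_cons // /even /zz /= !exprD; ring. Qed.

Lemma gf1_Lp i j : gf_dist_even p q i j = \sum_(s <- Lp i j) Wd s.
Proof.
rewrite /gf_dist_even.
apply: (@sum_tuple R i j.+1 (fun s => is_partition s && (largest s == j)) Wd).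
  exact: uniq_Lp.
move=> s; rewrite mem_Lp; case: (size s == i) => //=.
case Hp: (is_partition s) => //=; case Hl: (largest s == j); rewrite ?andbF //=.
rewrite andbT; apply/esym/allP => k Hk; rewrite ltnS -(eqP Hl); exact: (allP (part_le Hp)).
Qed.

Lemma gf2_Lp (w : seq nat -> R) n :
  gf_perim w n = \sum_(l < n.+2) \sum_(s <- Lp l (n.+1 - l)) w s.
Proof.
rewrite /gf_perim; apply: eq_bigr => -[l Hl] _ /=.
apply: (@sum_tuple R l n.+2 (fun s => is_partition s && (perimeter s == n)) w).
  exact: uniq_Lp.
move=> s; rewrite mem_Lp; case Hs: (size s == l) => //=.
case Hp: (is_partition s) => //=.
have [H1 H2] := part_pos Hp; have H3 := part_le Hp.
move: Hs; rewrite /perimeter /nparts => /eqP Hs; rewrite Hs.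
move: H1 H3; case: (largest s) => [|L] // _ H3.
case: (L.+1 =P (n.+1 - l)%N) => [E|E].
  have -> : (L.+1 + l - 1 == n)%N by apply/eqP; lia.
  rewrite andbT; apply/esym/allP => k Hk; have := allP H3 k Hk; lia.
have -> : (L.+1 + l - 1 == n)%N = false by apply/negbTE/eqP; lia.
all: by rewrite ?andbF.
Qed.

Definition Dc1 i b := \sum_(s <- decs i b) Wd s.
Definition Mc1 i b := \sum_(s <- decs i b) p ^+ (b \notin s) * Wd s.

Lemma rec1 N :
  eqm2 N ((\poly_(j < N) tr N (fun i => gf_dist_even p q i j)) *
            ((uu 1 q 1 * uu 1 q 2)%:P - (vv 1 p q 1 * vv 1 p q 2)%:P * 'X^2))
         ((p%:P * 'X * uu 1 q 2)%:P * 'X + ((p * q)%:P * 'X * vv 1 p q 1)%:P * 'X^2).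
Proof.
apply: (@generic_coef R 1 p q N Dc1 Mc1).
- by move=> b; rewrite /Dc1 /= big_seq1 /Wd /= mulr1.
- by move=> i; rewrite /Dc1 big_nil.
- by move=> i; rewrite gf1_Lp; case: i => [|i]; rewrite big_nil.
- by move=> b; rewrite gf1_Lp big_nil.
- by move=> b; rewrite /Mc1 /= big_seq1 /Wd /= expr1 !mulr1.
- move=> i b; rewrite /Mc1 /Dc1 sum_decs_split; congr (_ + _).
    rewrite big_distrr; apply: eq_big_seq => s Hs.
    have Hn : (b.+1 \notin s).
      by apply/negP => /(allP (decs_le Hs)); rewrite ltnn.
    by rewrite Hn expr1.
  rewrite mul1r big_distrr; apply: eq_bigr => s _.
  by rewrite Wd_cons mem_head /= expr0 mul1r.
- move=> i b; rewrite /Dc1 sum_decs_split; congr (_ + _).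
  by rewrite /Mc1 big_distrr; apply: eq_bigr => s _; rewrite Wd_cons.
- move=> i b; rewrite gf1_Lp /= big_map /Mc1 big_distrr; apply: eq_bigr => s _.
  by rewrite Wd_cons.
Qed.

Definition Qc i b := \sum_(s <- decs i b) Vr s.
Definition Nc i b := \sum_(s <- decs i b) p ^+ (head 0%N s == b) * Vr s.
Definition Hc i j := \sum_(s <- Lp i j) Vr s.

Lemma rec2 N :
  eqm2 N ((\poly_(j < N) tr N (fun i => Hc i j)) *
            ((uu p q 1 * uu p q 2)%:P - (vv p 1 q 1 * vv p 1 q 2)%:P * 'X^2))
         ((1%:P * 'X * uu p q 2)%:P * 'X + ((1 * q)%:P * 'X * vv p 1 q 1)%:P * 'X^2).
Proof.
apply: (@generic_coef R p 1 q N Qc Nc).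
- by move=> b; rewrite /Qc /= big_seq1 /Vr /rep /= big_ord0 mulr1.
- by move=> i; rewrite /Qc big_nil.
- by move=> i; rewrite /Hc; case: i => [|i]; rewrite big_nil.
- by move=> b; rewrite /Hc big_nil.
- by move=> b; rewrite /Nc /= big_seq1 /Vr /rep /= big_ord0 !mulr1.
- move=> i b; rewrite /Nc /Qc sum_decs_split; congr (_ + _).
    rewrite mul1r; apply: eq_big_seq => s Hs.
    have Hn : (head 0%N s == b.+1) = false.
      apply/negbTE; have := decs_le Hs; case: s {Hs} => [|y s] //= /andP[Hy _].
      by apply/eqP => E; rewrite E ltnn in Hy.
    by rewrite Hn expr0 mul1r.
  rewrite -mulrA !big_distrr; apply: eq_bigr => s _ /=.
  by rewrite Vr_cons // eqxx expr1; ring.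
- move=> i b; rewrite /Qc sum_decs_split; congr (_ + _).
  by rewrite /Nc big_distrr; apply: eq_bigr => s _; rewrite Vr_cons.
- move=> i b; rewrite /Hc /= big_map /Nc big_distrr; apply: eq_bigr => s _.
  by rewrite Vr_cons.
Qed.

End W.

Section F.
Variable R : comRingType.

Lemma eqm_eq N (P Q : {poly R}) : P = Q -> eqm N P Q.
Proof. by move=> ->; reflexivity. Qed.
Lemma eqm2_eq N (P Q : {poly {poly R}}) : P = Q -> eqm2 N P Q.
Proof. by move=> ->; reflexivity. Qed.

Lemma bmul00 (f g : bser R) : bmul f g 0 0 = f 0%N 0%N * g 0%N 0%N.
Proof. by rewrite /bmul !big_ord1 !subnn. Qed.

Lemma umul0 (f g : user R) : umul f g 0 = f 0%N * g 0%N.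
Proof. by rewrite /umul big_ord1 subnn. Qed.

Lemma coef_hornerX (F : {poly {poly R}}) k :
  (F.['X])`_k = \sum_(j < k.+1) (F`_j)`_(k - j).
Proof.
rewrite (@horner_coef_wide _ (maxn (size F) k.+1)) ?leq_maxl // coef_sum.
rewrite (big_ord_widen (maxn (size F) k.+1) (fun j => (F`_j)`_(k - j))) ?leq_maxr //.
rewrite [in RHS]big_mkcond; apply: eq_bigr => j _; rewrite coefMXn ltnS.
by case: ltnP.
Qed.

Lemma spec_eqm2 M (F G : {poly {poly R}}) : eqm2 M F G -> eqm M F.['X] G.['X].
Proof.
move=> H k Hk; rewrite !coef_hornerX; apply: eq_bigr => -[j Hj] _ /=.
apply: H; lia.
Qed.

Lemma eqm_trN N M (f : user R) : (N <= M)%N -> eqm N (tr M f) (tr N f).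
Proof. by move=> H k Hk; rewrite !coef_tr Hk (leq_trans Hk H). Qed.

Lemma gf_perim_ext (w1 w2 : seq nat -> R) n :
  (forall s, w1 s = w2 s) -> gf_perim w1 n = gf_perim w2 n.
Proof. by move=> H; apply: eq_bigr => l _; apply: eq_bigr => t _; apply: H. Qed.

Definition Den2 (p q : R) : {poly R} :=
  1 - (p * (1 + q))%:P * 'X - (1 - p ^+ 2 * q)%:P * 'X^2
    - ((1 - p) * (1 + q))%:P * 'X^3 - ((p - 1) ^+ 2 * q)%:P * 'X^4.
Definition Num2 (p q : R) : {poly R} := 'X * (1 - ((p - 1) * q)%:P * ('X^2 + 'X)).

Lemma core2 (p q : R) N :
  eqm N (tr N (gf_perim (fun s => p ^+ rep s * q ^+ even s)) * Den2 p q) (Num2 p q).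
Proof.
set M := N.+1.
have H := spec_eqm2 (@rec2 R p q M).
rewrite hornerM !(hornerD, hornerN, hornerM, hornerC, hornerX, hornerXn) in H.
set Hb := \poly_(j < M) _ in H.
have HH : eqm M Hb.['X] ('X * tr M (gf_perim (fun s => p ^+ rep s * q ^+ even s))).
  move=> k Hk; rewrite coef_hornerX coefXM.
  have E : \sum_(j < k.+1) (Hb`_j)`_(k - j) = \sum_(j < k.+1) Hc p q (k - j) j.
    apply: eq_bigr => -[j Hj] _ /=; rewrite coef_poly (_ : (j < M)%N = true); last by lia.
    by rewrite coef_tr (_ : (k - j < M)%N = true) //; lia.
  rewrite E; case: k Hk {E} => [|k] Hk /=.
    by rewrite big_ord1 /Hc big_nil.
  rewrite coef_tr (_ : (k < M)%N = true); last by lia.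
  rewrite gf2_Lp [LHS](reindex_inj rev_ord_inj) /=.
  apply: eq_bigr => -[j Hj] _ /=.
  by rewrite /Hc (_ : (k.+1 - (k.+2 - j.+1) = j)%N) ?subSS //; lia.
rewrite HH in H.
set P := tr M _ in H.
have H' : eqm M ('X * (P * Den2 p q)) ('X * Num2 p q).
  have e1 : 'X * (P * Den2 p q) = 'X * P *
     (uu p q 1 * uu p q 2 - vv p 1 q 1 * vv p 1 q 2 * ('X * 'X)).
    by rewrite /Den2 /vv /uu /zz /=; ring.
  have e2 : 'X * Num2 p q =
     1%:P * 'X * uu p q 2 * 'X + (1 * q)%:P * 'X * vv p 1 q 1 * ('X * 'X).
    by rewrite /Num2 /vv /uu /zz /=; ring.
  by rewrite e1 e2.
rewrite -(eqm_trN _ (leqnSn N)) -/P.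
by move=> k Hk; have := H' k.+1 Hk; rewrite !coefXM.
Qed.


End F.

Lemma upowX0 (R : comRingType) k : upow (uX R) k.+1 0 = 0.
Proof. by rewrite /upow iterS umul0 /uX /= mul0r. Qed.

Lemma id2 (R : comRingType) (p q : R) :
  (let X := uX R in let O := ucst (1 : R) in let c := @ucst R in
   let num := umul X (usub O (umul (c ((p - 1) * q)) (uadd (upow X 2) X))) in
   let den := usub (usub (usub (usub O (umul (c (p * (1 + q))) X))
                                    (umul (c (1 - p ^+ 2 * q)) (upow X 2)))
                              (umul (c ((1 - p) * (1 + q))) (upow X 3)))
                   (umul (c ((p - 1) ^+ 2 * q)) (upow X 4)) in
   forall n, gf_perim (fun s => p ^+ rep s * q ^+ even s) n = udiv num den n).
Proof.
move=> X O c num den n.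
apply: (@udiv_char R n.+1 _ num den (Num2 p q) (Den2 p q)) => //.
- by rewrite /den /usub !umul0 !upowX0 /O /c /ucst /X /uX /= !mulr0 !subr0.
- rewrite /den /O /c /X !tr_sub !tr_mul ?tr_pow !tr_cst !tr_X.
  by apply: eqm_eq; rewrite /Den2; ring.
- rewrite /num /O /c /X !tr_mul !tr_sub !tr_mul !tr_add ?tr_mul ?tr_pow !tr_cst !tr_X.
  by apply: eqm_eq; rewrite /Num2; ring.
- exact: core2.
Qed.

Lemma id3 (R : comRingType) (p : R) :
  (let X := uX R in let O := ucst (1 : R) in let c := @ucst R in
   let rhs := udiv X (usub (usub O (umul (c (1 + p)) X))
                           (umul (c (1 - p)) (upow X 2))) in
   (forall n, gf_perim (fun s => p ^+ rep s) n = rhs n) /\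
   (forall n, gf_perim (fun s => p ^+ even s) n = rhs n)).
Proof.
move=> X O c rhs.
set D1 : {poly R} := 1 - (1 + p)%:P * 'X - (1 - p)%:P * 'X^2.
have d0 : usub (usub O (umul (c (1 + p)) X)) (umul (c (1 - p)) (upow X 2)) 0%N = 1.
  by rewrite /usub !umul0 !upowX0 /O /c /ucst /X /uX /= !mulr0 !subr0.
have hd : forall N, eqm N (tr N (usub (usub O (umul (c (1 + p)) X)) (umul (c (1 - p)) (upow X 2)))) D1.
  move=> N; rewrite /O /c /X !tr_sub !tr_mul ?tr_pow !tr_cst !tr_X.
  by apply: eqm_eq; rewrite /D1; ring.
have hn : forall N, eqm N (tr N X) 'X by move=> N; exact: tr_X.
split => n.
- apply: (@udiv_char R n.+1 _ X _ 'X D1 d0 (hd _) (hn _)) => //.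
  have := @core2 R p 1 n.+1.
  have -> : tr n.+1 (gf_perim (fun s => p ^+ rep s * 1 ^+ even s)) =
            tr n.+1 (gf_perim (fun s => p ^+ rep s)).
    by rewrite /tr; apply: eq_poly => k _; apply: gf_perim_ext => s; rewrite expr1n mulr1.
  set P := tr _ _ => H.
  pose N1 : {poly R} := 1 - (p - 1)%:P * 'X - (p - 1)%:P * 'X^2.
  apply: (@eqm_cancel R _ _ _ N1).
    by rewrite /N1 !coefB coef1 coefCM coefX coefCM coefXn /= !mulr0 !subr0.
  have e1 : P * D1 * N1 = P * Den2 p 1 by rewrite /D1 /N1 /Den2; ring.
  have e2 : 'X * N1 = Num2 p 1 by rewrite /N1 /Num2; ring.
  by rewrite e1 e2.
- apply: (@udiv_char R n.+1 _ X _ 'X D1 d0 (hd _) (hn _)) => //.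
  have := @core2 R 1 p n.+1.
  have -> : tr n.+1 (gf_perim (fun s => 1 ^+ rep s * p ^+ even s)) =
            tr n.+1 (gf_perim (fun s => p ^+ even s)).
    by rewrite /tr; apply: eq_poly => k _; apply: gf_perim_ext => s; rewrite expr1n mul1r.
  set P := tr _ _ => H.
  have e1 : D1 = Den2 1 p by rewrite /D1 /Den2; ring.
  have e2 : 'X = Num2 1 p by rewrite /Num2; ring.
  by rewrite e1 e2.
Qed.

Lemma id1 (R : comRingType) (p q : R) :
  (let X := bX R in let Y := bY R in
   let P := bcst p in let Q := bcst q in let O := bcst (1 : R) in
   let A := badd O (bdiv (bmul P X) (bsub O X)) in
   let C := badd O (bdiv (bmul (bmul P Q) X) (bsub O (bmul Q X))) in
   let B := badd (bdiv (bmul (bmul P Q) X) (bsub O (bmul Q X)))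
                 (bdiv (bmul (bmul P (bmul X Y))
                             (badd (bsub O (bmul Q X)) (bmul (bmul P Q) X)))
                       (bmul (bsub O X) (bsub O (bmul Q X)))) in
   let rhs := badd (bdiv (bmul P (bmul X Y)) (bsub O X))
                   (bdiv (bmul (bmul B A) (bpow Y 2))
                         (bsub O (bmul (bmul A C) (bpow Y 2)))) in
   forall i j, gf_dist_even p q i j = rhs i j).
Proof.
move=> X Y P Q O A C B rhs i j.
set N := (i + j).+1.
apply: (@eqm2_tr R N); try lia.
set x2 : {poly {poly R}} := 'X%:P.
set y2 : {poly {poly R}} := 'X.
set pp : {poly {poly R}} := p%:P%:P.
set qq : {poly {poly R}} := q%:P%:P.
set Den : {poly {poly R}} := (uu 1 q 1 * uu 1 q 2)%:P - (vv 1 p q 1 * vv 1 p q 2)%:P * 'X^2.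
set Num : {poly {poly R}} :=
  (p%:P * 'X * uu 1 q 2)%:P * 'X + ((p * q)%:P * 'X * vv 1 p q 1)%:P * 'X^2.
apply: (@eqm2_cancel R N _ _ Den).
  by rewrite /Den coefB coefMXn /= subr0 coefC /= coef0M !uu0 mulr1.
transitivity Num; first exact: rec1.
symmetry.
have Hden : Den = (1 - x2) * (1 - qq * x2)
    - (1 - x2 + pp * x2) * (1 - qq * x2 + pp * qq * x2) * y2 ^+ 2.
  by rewrite /Den /vv /uu /zz /= /x2 /y2 /pp /qq; ring.
have Hnum : Num = pp * x2 * (1 - qq * x2) * y2 + pp * qq * x2 * (1 - x2 + pp * x2) * y2 ^+ 2.
  by rewrite /Num /vv /uu /zz /= /x2 /y2 /pp /qq; ring.
have hO : eqm2 N (tr2 N O) 1 by rewrite /O tr2_cst !polyC1; reflexivity.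
have hP : eqm2 N (tr2 N P) pp by exact: tr2_cst.
have hQ : eqm2 N (tr2 N Q) qq by exact: tr2_cst.
have hX : eqm2 N (tr2 N X) x2 by exact: tr2_X.
have hY : eqm2 N (tr2 N Y) y2 by exact: tr2_Y.
set I1 := tr2 N (binv (bsub O X)).
set I2 := tr2 N (binv (bsub O (bmul Q X))).
set I3 := tr2 N (binv (bmul (bsub O X) (bsub O (bmul Q X)))).
set I4 := tr2 N (binv (bsub O (bmul (bmul A C) (bpow Y 2)))).
have hI1 : eqm2 N (I1 * (1 - x2)) 1.
  have := @tr2_inv R N (bsub O X).
  rewrite tr2_sub hO hX; apply.
  by rewrite /bsub /O /X /bcst /bX /= subr0.
have hI2 : eqm2 N (I2 * (1 - qq * x2)) 1.
  have := @tr2_inv R N (bsub O (bmul Q X)).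
  rewrite tr2_sub tr2_mul hO hQ hX; apply.
  by rewrite /bsub bmul00 /O /Q /X /bcst /bX /= mulr0 subr0.
have hI3 : eqm2 N (I3 * ((1 - x2) * (1 - qq * x2))) 1.
  have := @tr2_inv R N (bmul (bsub O X) (bsub O (bmul Q X))).
  rewrite tr2_mul !tr2_sub tr2_mul hO hQ hX; apply.
  by rewrite bmul00 /bsub bmul00 /O /Q /X /bcst /bX /= mulr0 !subr0 mulr1.
set At := 1 + pp * x2 * I1.
set Ct := 1 + pp * qq * x2 * I2.
have hA : eqm2 N (tr2 N A) At.
  by rewrite /A tr2_add /bdiv !tr2_mul hO hP hX; reflexivity.
have hC : eqm2 N (tr2 N C) Ct.
  by rewrite /C tr2_add /bdiv !tr2_mul hO hP hQ hX; reflexivity.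
set Bt := pp * qq * x2 * I2 + pp * (x2 * y2) * ((1 - qq * x2) + pp * qq * x2) * I3.
have hB : eqm2 N (tr2 N B) Bt.
  by rewrite /B tr2_add /bdiv !tr2_mul tr2_add tr2_sub !tr2_mul hO hP hQ hX hY; reflexivity.
have hI4 : eqm2 N (I4 * (1 - At * Ct * y2 ^+ 2)) 1.
  have := @tr2_inv R N (bsub O (bmul (bmul A C) (bpow Y 2))).
  rewrite tr2_sub !tr2_mul hO hA hC hY ?tr2_cst ?polyC1 ?mulr1 -expr2; apply.
  rewrite /bsub /bpow /= !bmul00 /O /Y /bcst /bY /=.
  by rewrite !mul0r mulr0 subr0.
have hT : eqm2 N (tr2 N rhs) (pp * (x2 * y2) * I1 + Bt * At * y2 ^+ 2 * I4).
  rewrite /rhs tr2_add /bdiv !tr2_mul hP hX hY hA hB ?tr2_cst ?polyC1 ?mulr1 -expr2; reflexivity.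
rewrite hT Hden Hnum.
set U := (1 - x2) * (1 - qq * x2).
set A' := 1 - x2 + pp * x2.
set C' := 1 - qq * x2 + pp * qq * x2.
have sA : eqm2 N (At * (1 - x2)) A'.
  have -> : At * (1 - x2) = (1 - x2) + pp * x2 * (I1 * (1 - x2)) by rewrite /At; ring.
  by rewrite hI1 mulr1; reflexivity.
have sC : eqm2 N (Ct * (1 - qq * x2)) C'.
  have -> : Ct * (1 - qq * x2) = (1 - qq * x2) + pp * qq * x2 * (I2 * (1 - qq * x2))
    by rewrite /Ct; ring.
  by rewrite hI2 mulr1; reflexivity.
have sD : eqm2 N (U - A' * C' * y2 ^+ 2) (U * (1 - At * Ct * y2 ^+ 2)).
  have -> : U * (1 - At * Ct * y2 ^+ 2) =
     U - (At * (1 - x2)) * (Ct * (1 - qq * x2)) * y2 ^+ 2 by rewrite /U; ring.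
  by rewrite sA sC; reflexivity.
rewrite sD.
have -> : (pp * (x2 * y2) * I1 + Bt * At * y2 ^+ 2 * I4) * (U * (1 - At * Ct * y2 ^+ 2)) =
   pp * (x2 * y2) * (1 - qq * x2) * (1 - At * Ct * y2 ^+ 2) * (I1 * (1 - x2))
   + Bt * U * At * y2 ^+ 2 * (I4 * (1 - At * Ct * y2 ^+ 2)) by rewrite /U; ring.
rewrite hI1 hI4.
have -> : Bt * U * At * y2 ^+ 2 =
   pp * qq * x2 * (1 - x2) * At * y2 ^+ 2 * (I2 * (1 - qq * x2))
   + pp * (x2 * y2) * C' * At * y2 ^+ 2 * (I3 * U) by rewrite /Bt /U /C'; ring.
rewrite hI2 hI3.
have -> : pp * (x2 * y2) * (1 - qq * x2) * (1 - At * Ct * y2 ^+ 2) * 1 +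
   (pp * qq * x2 * (1 - x2) * At * y2 ^+ 2 * 1 + pp * (x2 * y2) * C' * At * y2 ^+ 2 * 1) * 1
   = pp * x2 * y2 * (1 - qq * x2) - pp * x2 * y2 ^+ 3 * At * (Ct * (1 - qq * x2))
     + pp * qq * x2 * y2 ^+ 2 * (At * (1 - x2)) + pp * x2 * y2 ^+ 3 * C' * At by ring.
rewrite sA sC.
by apply: eqm2_eq; rewrite /A' /C'; ring.
Qed.


Theorem theorem2p4 (R : comRingType) (p q : R) :
  (* first identity, bivariate series in x, y *)
  (let X := bX R in let Y := bY R in
   let P := bcst p in let Q := bcst q in let O := bcst (1 : R) in
   let A := badd O (bdiv (bmul P X) (bsub O X)) in
   let C := badd O (bdiv (bmul (bmul P Q) X) (bsub O (bmul Q X))) in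
   let B := badd (bdiv (bmul (bmul P Q) X) (bsub O (bmul Q X)))
                 (bdiv (bmul (bmul P (bmul X Y))
                             (badd (bsub O (bmul Q X)) (bmul (bmul P Q) X)))
                       (bmul (bsub O X) (bsub O (bmul Q X)))) in
   let rhs := badd (bdiv (bmul P (bmul X Y)) (bsub O X))
                   (bdiv (bmul (bmul B A) (bpow Y 2))
                         (bsub O (bmul (bmul A C) (bpow Y 2)))) in
   forall i j, gf_dist_even p q i j = rhs i j)
  /\
  (* second identity, univariate series in x *)
  (let X := uX R in let O := ucst (1 : R) in let c := @ucst R in
   let num := umul X (usub O (umul (c ((p - 1) * q)) (uadd (upow X 2) X))) in
   let den := usub (usub (usub (usub O (umul (c (p * (1 + q))) X))
                                    (umul (c (1 - p ^+ 2 * q)) (upow X 2)))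
                              (umul (c ((1 - p) * (1 + q))) (upow X 3)))
                   (umul (c ((p - 1) ^+ 2 * q)) (upow X 4)) in
   forall n, gf_perim (fun s => p ^+ rep s * q ^+ even s) n = udiv num den n)
  /\
  (* in particular *)
  (let X := uX R in let O := ucst (1 : R) in let c := @ucst R in
   let rhs := udiv X (usub (usub O (umul (c (1 + p)) X))
                           (umul (c (1 - p)) (upow X 2))) in
   (forall n, gf_perim (fun s => p ^+ rep s) n = rhs n) /\
   (forall n, gf_perim (fun s => p ^+ even s) n = rhs n)).
Proof.
split; first exact: id1.
split; first exact: id2.
exact: id3.
Qed.
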